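(* Let $R$ be a quotient root system and $\Phi\subseteq R^+$ an inversion set. The relation $\leq$ on the set of connected components of $G_\Phi^{\Phi^c}$, defined by $A\le B$ iff there is a (possibly empty) sequence of components $C_1,\dots,C_n$ such that the standard sum $A+C_1+\cdots+C_n$ is defined and equals $B$, is a partial order.
   Context: A quotient root system (QRS) $R$ is the set of non-zero images of a root system $\Delta$ (with base $\Sigma$) under the orthogonal projection of its ambient Euclidean space onto $(\mathrm{span}\,J)^\perp$ for some $J\subsetneq\Sigma$; its base consists of the images of $\Sigma\setminus J$, and every root is an integer combination of the base with all coefficients $\ge0$ (positive roots, $R^+$) or all $\le0$. $\Phi\subseteq R^+$ is closed if $\alpha,\beta\in\Phi$, $\alpha+\beta\in R$ imply $\alpha+\beta\in\Phi$; co-closed if $\Phi^c:=R^+\setminus\Phi$ is closed; an inversion set if both. $G_\Phi^{\Phi^c}$ is the graph with vertex set $\Phi$ in which $\alpha,\alpha'$ are adjacent iff $\alpha-\alpha'\in\Phi^c\cup(-\Phi^c)$; components are its connected components. Addition of components: for components $A,B$ let $Z=\{\alpha+\beta:\alpha\in A,\beta\in B\}\cap R$. If $Z\ne\emptyset$ lies in a single component $C$, $A+B:=C$. If $Z$ meets more than one component, then (as established in the paper) $A=B$ and $Z$ meets exactly two components, $A$ and some $C\ne A$; then $A+A:=C$. If $Z=\emptyset$, $A+B$ is undefined. The standard sum $A+C_1+\cdots+C_n$ means $(\cdots((A+C_1)+C_2)+\cdots)+C_n$, with every partial sum required to be defined; for $n=0$ it is $A$. *)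

(* Defs.v *)
From HB Require Import structures.
From mathcomp Require Import all_boot all_order all_algebra.
From mathcomp Require Import finmap.
From Stdlib Require Import Relations.

Set Implicit Arguments.
Unset Strict Implicit.
Unset Printing Implicit Defensive.

Import Order.TTheory GRing.Theory Num.Theory.
Local Open Scope fset_scope.
Local Open Scope ring_scope.

Section QRS.
Variables (R : realFieldType) (n : nat).
Notation V := 'rV[R]_n.

Definition dotv (u v : V) : R := (u *m v^T) 0 0.

Definition in_span (S : {fset V}) (v : V) : Prop :=
  exists c : V -> R, v = \sum_(a <- S) c a *: a.

Definition lin_indep (S : {fset V}) : Prop :=
  forall c : V -> R, \sum_(a <- S) c a *: a = 0 -> forall a, a \in S -> c a = 0.

Definition root_system (D : {fset V}) : Prop :=
  [/\ (0 : V) \notin D,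
      (forall v : V, in_span D v),
      (forall a b, a \in D -> b \in D ->
         b - ((2 * dotv b a) / dotv a a) *: a \in D),
      (forall a b, a \in D -> b \in D ->
         exists z : int, (2 * dotv b a) / dotv a a = z%:~R) &
      (forall a (c : R), a \in D -> c *: a \in D -> c = 1 \/ c = -1)].

Definition is_base (D S : {fset V}) : Prop :=
  [/\ S `<=` D, lin_indep S, (forall v : V, in_span S v) &
      (forall b, b \in D -> exists k : V -> int,
          b = \sum_(s <- S) (k s)%:~R *: s /\
          ((forall s, s \in S -> 0 <= k s) \/ (forall s, s \in S -> k s <= 0)))].

Definition is_orth_proj (J : {fset V}) (p : V -> V) : Prop :=
  forall v : V, in_span J (v - p v) /\ (forall j, j \in J -> dotv (p v) j = 0).

Variables (D S J : {fset V}) (p : V -> V) (Phi : {fset V}).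

(* the quotient root system R: nonzero images of D *)
Definition inQ (b : V) : Prop := exists2 a, a \in D & b = p a /\ b != 0.

Definition inQplus (b : V) : Prop :=
  inQ b /\ exists k : V -> nat, b = \sum_(s <- S `\` J) (k s)%:R *: p s.

Definition inPhic (b : V) : Prop := inQplus b /\ b \notin Phi.

Definition closed_Phi : Prop :=
  forall a b, a \in Phi -> b \in Phi -> inQ (a + b) -> a + b \in Phi.

Definition coclosed_Phi : Prop :=
  forall a b, inPhic a -> inPhic b -> inQ (a + b) -> inPhic (a + b).

Definition inversion_set : Prop :=
  [/\ (forall b, b \in Phi -> inQplus b), closed_Phi & coclosed_Phi].

Definition adj (a a' : V) : Prop :=
  [/\ a \in Phi, a' \in Phi & (inPhic (a - a') \/ inPhic (a' - a))].

Definition conn : V -> V -> Prop := clos_refl_trans V adj.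

Definition is_comp (C : {fset V}) : Prop :=
  exists2 x, x \in Phi & forall y, y \in C <-> conn x y.

Definition inZ (A B : {fset V}) (z : V) : Prop :=
  exists a b, [/\ a \in A, b \in B, z = a + b & inQ z].

Definition comp_add (A B C : {fset V}) : Prop :=
  [/\ is_comp A, is_comp B, is_comp C &
    ( ((exists z, inZ A B z) /\ (forall z, inZ A B z -> z \in C))
    \/ [/\ A = B, C <> A,
           (exists2 z, inZ A B z & z \in A),
           (exists2 z, inZ A B z & z \in C) &
           (forall z, inZ A B z -> z \in A \/ z \in C)] )].

(* std_sum A [:: C1; ...; Cn] B : the standard sum A + C1 + ... + Cn is
   defined and equals B *)
Inductive std_sum : {fset V} -> seq {fset V} -> {fset V} -> Prop :=
| std_sum_nil A : std_sum A [::] A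
| std_sum_cons A C cs D B :
    comp_add A C D -> std_sum D cs B -> std_sum A (C :: cs) B.

Definition comp_le (A B : {fset V}) : Prop :=
  exists cs, (forall C, C \in cs -> is_comp C) /\ std_sum A cs B.

End QRS.

Definition partial_order_on (T : Type) (P : T -> Prop) (le : T -> T -> Prop) :=
  [/\ (forall x, P x -> le x x),
      (forall x y, P x -> P y -> le x y -> le y x -> x = y) &
      (forall x y z, P x -> P y -> P z -> le x y -> le y z -> le x z)].

(* Main.v *)
Require Import Defs.
From HB Require Import structures.
From mathcomp Require Import all_boot all_order all_algebra.
From mathcomp Require Import finmap.
From mathcomp Require Import ring lra zify.
From Stdlib Require Import Relations IndefiniteDescription.

Set Implicit Arguments.
Unset Strict Implicit.
Unset Printing Implicit Defensive.
Import Order.TTheory GRing.Theory Num.Theory.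
Local Open Scope fset_scope.
Local Open Scope ring_scope.



Section Dot.
Variables (R : realFieldType) (n : nat).
Notation V := 'rV[R]_n.
Notation dot := (@dotv R n).

Lemma dotvE (u v : V) : dot u v = \sum_i u 0 i * v 0 i.
Proof. by rewrite /dotv !mxE; apply: eq_bigr => i _; rewrite !mxE. Qed.

Lemma dotvC (u v : V) : dot u v = dot v u.
Proof. by rewrite !dotvE; apply: eq_bigr => i _; rewrite mulrC. Qed.

Lemma dotvDl (u v w : V) : dot (u + v) w = dot u w + dot v w.
Proof. by rewrite !dotvE -big_split; apply: eq_bigr => i _; rewrite !mxE mulrDl. Qed.

Lemma dotvDr (u v w : V) : dot w (u + v) = dot w u + dot w v.
Proof. by rewrite dotvC dotvDl !(dotvC w). Qed.

Lemma dotvZl (k : R) (u w : V) : dot (k *: u) w = k * dot u w.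
Proof. by rewrite !dotvE mulr_sumr; apply: eq_bigr => i _; rewrite !mxE mulrA. Qed.

Lemma dotvZr (k : R) (u w : V) : dot w (k *: u) = k * dot w u.
Proof. by rewrite dotvC dotvZl dotvC. Qed.

Lemma dotvNl (u w : V) : dot (- u) w = - dot u w.
Proof. by rewrite -scaleN1r dotvZl mulN1r. Qed.

Lemma dotvNr (u w : V) : dot w (- u) = - dot w u.
Proof. by rewrite dotvC dotvNl dotvC. Qed.

Lemma dotvBl (u v w : V) : dot (u - v) w = dot u w - dot v w.
Proof. by rewrite dotvDl dotvNl. Qed.

Lemma dotvBr (u v w : V) : dot w (u - v) = dot w u - dot w v.
Proof. by rewrite dotvDr dotvNr. Qed.

Lemma dotv0l (w : V) : dot 0 w = 0.
Proof. by rewrite -(scale0r (0 : V)) dotvZl mul0r. Qed.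

Lemma dotv0r (w : V) : dot w 0 = 0.
Proof. by rewrite dotvC dotv0l. Qed.

Lemma dotv_suml (I : Type) (s : seq I) (F : I -> V) (w : V) :
  dot (\sum_(i <- s) F i) w = \sum_(i <- s) dot (F i) w.
Proof.
elim: s => [|a s IH]; first by rewrite !big_nil dotv0l.
by rewrite !big_cons dotvDl IH.
Qed.

Lemma dotv_sumr (I : Type) (s : seq I) (F : I -> V) (w : V) :
  dot w (\sum_(i <- s) F i) = \sum_(i <- s) dot w (F i).
Proof. by rewrite dotvC dotv_suml; apply: eq_bigr => i _; rewrite dotvC. Qed.

Lemma dotv_ge0 (u : V) : 0 <= dot u u.
Proof. by rewrite dotvE; apply: sumr_ge0 => i _; rewrite -expr2 sqr_ge0. Qed.

Lemma dotv_eq0 (u : V) : dot u u = 0 -> u = 0.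
Proof.
rewrite dotvE => /eqP; rewrite psumr_eq0 => [H|i _]; last by rewrite -expr2 sqr_ge0.
apply/rowP => i; rewrite mxE.
have /allP/(_ i) := H; rewrite mem_index_enum /= => /(_ isT).
by rewrite mulf_eq0 orbb => /eqP.
Qed.

Lemma dotv_gt0 (u : V) : u != 0 -> 0 < dot u u.
Proof.
move=> nz; rewrite lt_neqAle dotv_ge0 andbT eq_sym; apply/eqP => /dotv_eq0 H.
by rewrite H eqxx in nz.
Qed.
End Dot.



Section Span.
Variables (R : realFieldType) (n : nat).
Notation V := 'rV[R]_n.
Notation dot := (@dotv R n).

Lemma span0 (X : {fset V}) : in_span X 0.
Proof. by exists (fun _ => 0); rewrite big1 // => i _; rewrite scale0r. Qed.

Lemma spanD (X : {fset V}) u v : in_span X u -> in_span X v -> in_span X (u + v).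
Proof.
move=> [c ->] [d ->]; exists (fun a => c a + d a).
by rewrite -big_split; apply: eq_bigr => i _; rewrite scalerDl.
Qed.

Lemma spanZ (X : {fset V}) k u : in_span X u -> in_span X (k *: u).
Proof.
move=> [c ->]; exists (fun a => k * c a).
by rewrite scaler_sumr; apply: eq_bigr => i _; rewrite scalerA.
Qed.

Lemma spanN (X : {fset V}) u : in_span X u -> in_span X (- u).
Proof. by move=> H; rewrite -scaleN1r; apply: spanZ. Qed.

Lemma spanB (X : {fset V}) u v : in_span X u -> in_span X v -> in_span X (u - v).
Proof. by move=> H1 H2; apply: spanD => //; apply: spanN. Qed.

Lemma sum_delta (X : {fset V}) t : t \in X ->
  \sum_(a <- X) (a == t)%:R *: a = t.
Proof.
move=> tX; rewrite (big_fsetD1 t) //= eqxx scale1r big1_fset ?addr0 //.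
by move=> i; rewrite !inE => /andP[/negPf -> _] _; rewrite scale0r.
Qed.

Lemma sum_deltaR (X : {fset V}) t : t \in X ->
  \sum_(a <- X) (t == a)%:R = 1 :> R.
Proof.
move=> tX; rewrite (big_fsetD1 t) //= eqxx big1_fset ?addr0 //.
by move=> i; rewrite !inE => /andP[H _] _; rewrite eq_sym (negPf H).
Qed.

Lemma span_mem (X : {fset V}) t : t \in X -> in_span X t.
Proof. by move=> tX; exists (fun a => (a == t)%:R); rewrite sum_delta. Qed.

Lemma dot_span (X : {fset V}) w v :
  (forall j, j \in X -> dot w j = 0) -> in_span X v -> dot w v = 0.
Proof.
move=> H [c ->]; rewrite dotv_sumr big_seq big1 // => i iX.
by rewrite dotvZr H // mulr0.
Qed.

Lemma span_orth0 (X : {fset V}) w :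
  (forall j, j \in X -> dot w j = 0) -> in_span X w -> w = 0.
Proof. by move=> H Hw; apply: dotv_eq0; apply: (dot_span H Hw). Qed.

Variables (J : {fset V}) (p : V -> V).
Hypothesis Hp : is_orth_proj J p.

Lemma p_span u : in_span J (u - p u).
Proof. by case: (Hp u). Qed.

Lemma p_orth u j : j \in J -> dot (p u) j = 0.
Proof. by case: (Hp u) => _; apply. Qed.

Lemma p_orth_span u v : in_span J v -> dot (p u) v = 0.
Proof. by apply: dot_span => j; apply: p_orth. Qed.

Lemma pD u v : p (u + v) = p u + p v.
Proof.
apply/eqP; rewrite -subr_eq0; apply/eqP; apply: (span_orth0 (X := J)).
  by move=> j jJ; rewrite !dotvBl dotvDl !p_orth // addr0 subrr.
have -> : p (u + v) - (p u + p v) = (u - p u) + (v - p v) - (u + v - p (u + v)).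
  by apply/rowP => i; rewrite !mxE; ring.
by apply: spanB; [apply: spanD|]; apply: p_span.
Qed.

Lemma pZ k u : p (k *: u) = k *: p u.
Proof.
apply/eqP; rewrite -subr_eq0; apply/eqP; apply: (span_orth0 (X := J)).
  by move=> j jJ; rewrite !dotvBl dotvZl !p_orth // mulr0 subr0.
have -> : p (k *: u) - k *: p u = k *: (u - p u) - (k *: u - p (k *: u)).
  by apply/rowP => i; rewrite !mxE; ring.
by apply: spanB; [apply: spanZ|]; apply: p_span.
Qed.

Lemma p0 : p 0 = 0.
Proof. by have := pZ 0 0; rewrite !scale0r. Qed.

Lemma pN u : p (- u) = - p u.
Proof. by rewrite -scaleN1r pZ scaleN1r. Qed.

Lemma pB u v : p (u - v) = p u - p v.
Proof. by rewrite pD pN. Qed.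

Lemma p_sum (I : Type) (s : seq I) (F : I -> V) :
  p (\sum_(i <- s) F i) = \sum_(i <- s) p (F i).
Proof.
elim: s => [|a s IH]; first by rewrite !big_nil p0.
by rewrite !big_cons pD IH.
Qed.

Lemma p_span0 w : in_span J w -> p w = 0.
Proof.
move=> Hw; apply: (span_orth0 (X := J)); first by move=> j; apply: p_orth.
have -> : p w = w - (w - p w) by apply/rowP => i; rewrite !mxE; ring.
by apply: spanB => //; apply: p_span.
Qed.

Lemma pJ j : j \in J -> p j = 0.
Proof. by move=> jJ; apply: p_span0; apply: span_mem. Qed.

Lemma p_idem u : p (p u) = p u.
Proof.
have : p (u - p u) = 0 by apply: p_span0; apply: p_span.
by rewrite pB => /eqP; rewrite subr_eq0 => /eqP <-.
Qed.
End Span.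



Section RS.
Variables (R : realFieldType) (n : nat).
Notation V := 'rV[R]_n.
Notation dot := (@dotv R n).
Variables (D : {fset V}).
Hypothesis HD : root_system D.

Lemma rs_neq0 a : a \in D -> a != 0.
Proof. by case: HD => H0 _ _ _ _ aD; apply: contraNneq H0 => <-. Qed.

Lemma rs_dot_gt0 a : a \in D -> 0 < dot a a.
Proof. by move=> aD; apply: dotv_gt0; apply: rs_neq0. Qed.

Lemma rs_refl a b : a \in D -> b \in D -> b - (2 * dot b a / dot a a) *: a \in D.
Proof. by case: HD => _ _ H _ _; apply: H. Qed.

Lemma rs_opp a : a \in D -> - a \in D.
Proof.
move=> aD; have := rs_refl aD aD.
have h : 2 * dot a a / dot a a = 2.
  by rewrite -mulrA divff ?mulr1 //; apply: lt0r_neq0; apply: rs_dot_gt0.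
by rewrite h scaler_nat mulr2n opprD addrA subrr add0r.
Qed.

Lemma rs_sum a b : a \in D -> b \in D -> dot a b < 0 -> a + b != 0 -> a + b \in D.
Proof.
move=> aD bD ab0 nz.
case: HD => _ _ Hrefl Hint Hred.
have A0 := rs_dot_gt0 aD; have B0 := rs_dot_gt0 bD.
have [z1 Hz1] := Hint b a bD aD.
have [z2 Hz2] := Hint a b aD bD.
have n1neg : (z1%:~R : R) < 0.
  by rewrite -Hz1 pmulr_llt0 ?invr_gt0 // pmulr_rlt0.
have n2neg : (z2%:~R : R) < 0.
  by rewrite -Hz2 dotvC pmulr_llt0 ?invr_gt0 // pmulr_rlt0.
have z1neg : z1 < 0 by rewrite -(ltrz0 R).
have z2neg : z2 < 0 by rewrite -(ltrz0 R).
case E1: (z1 == -1).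
  have := Hrefl b a bD aD; rewrite Hz1 (eqP E1).
  by rewrite mulrNz mulr1z scaleN1r opprK.
case E2: (z2 == -1).
  have := Hrefl a b aD bD; rewrite Hz2 (eqP E2).
  by rewrite mulrNz mulr1z scaleN1r opprK addrC.
have z1le : z1 <= -2.
  by move/negbT: E1 => E1; lia.
have z2le : z2 <= -2.
  by move/negbT: E2 => E2; lia.
have r1 : (z1%:~R : R) <= -2 by rewrite -(ler_int R) in z1le.
have r2 : (z2%:~R : R) <= -2 by rewrite -(ler_int R) in z2le.
set A := dot a a in A0 Hz2 r2; set B := dot b b in B0 Hz1 r1; set C := dot a b.
have e1 : 2 * C = z1%:~R * B by rewrite -Hz1 divfK // lt0r_neq0.
have e2 : 2 * C = z2%:~R * A by rewrite /C dotvC -Hz2 divfK // lt0r_neq0.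
have HC1 : C <= - B by nra.
have HC2 : C <= - A by nra.
set w := B *: a - C *: b.
have ww : dot w w = B * (A * B - C * C).
  rewrite /w !dotvBl !dotvBr !dotvZl !dotvZr -/A -/B -/C (dotvC b a) -/C; ring.
have hle : A * B <= C * C by nra.
have w0 : w = 0.
  apply: dotv_eq0; apply/eqP; rewrite eq_le dotv_ge0 andbT ww.
  by rewrite pmulr_rle0 // subr_le0.
have ha : a = (C / B) *: b.
  move/eqP: w0; rewrite /w subr_eq0 => /eqP h.
  have -> : a = B^-1 *: (B *: a) by rewrite scalerA mulVf ?scale1r // lt0r_neq0.
  by rewrite h scalerA mulrC.
have := Hred b (C / B) bD; rewrite -ha => /(_ aD) [h|h].
  have : C = B by move: h => /(congr1 (fun x => x * B)); rewrite divfK ?mul1r // lt0r_neq0.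
  lra.
by move: nz; rewrite ha h scaleN1r addNr eqxx.
Qed.
End RS.



Section Base.
Variables (R : realFieldType) (n : nat).
Notation V := 'rV[R]_n.
Notation dot := (@dotv R n).
Variables (D S J : {fset V}) (p : V -> V).
Hypothesis HD : root_system D.
Hypothesis HS : is_base D S.
Hypothesis HJS : J `<` S.
Hypothesis Hp : is_orth_proj J p.

Lemma JS : {subset J <= S}.
Proof. by apply/fsubsetP; apply: fproper_sub. Qed.

Lemma SD : {subset S <= D}.
Proof. by case: HS => H _ _ _; apply/fsubsetP. Qed.

Lemma spanS v : in_span S v.
Proof. by case: HS => _ _ H _. Qed.

Definition coord (v : V) : V -> R :=
  proj1_sig (constructive_indefinite_description _ (spanS v)).

Lemma coord_spec v : v = \sum_(a <- S) coord v a *: a.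
Proof. exact: (proj2_sig (constructive_indefinite_description _ (spanS v))). Qed.

Lemma coord_uniq v c : v = \sum_(a <- S) c a *: a ->
  forall s, s \in S -> c s = coord v s.
Proof.
move=> Hv s sS; case: HS => _ Hind _ _.
have H0 : \sum_(a <- S) (c a - coord v a) *: a = 0.
  rewrite (eq_bigr (fun a => c a *: a - coord v a *: a)); last by move=> a _; rewrite scalerBl.
  by rewrite sumrB -Hv -coord_spec subrr.
by apply/eqP; rewrite -subr_eq0; apply/eqP; apply: (Hind _ H0).
Qed.

Lemma coordD u v s : s \in S -> coord (u + v) s = coord u s + coord v s.
Proof.
move=> sS; symmetry; apply: (coord_uniq (c := fun a => coord u a + coord v a)) => //.
rewrite (eq_bigr (fun a => coord u a *: a + coord v a *: a)); last by move=> a _; rewrite scalerDl.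
by rewrite big_split -!coord_spec.
Qed.

Lemma coordZ k v s : s \in S -> coord (k *: v) s = k * coord v s.
Proof.
move=> sS; symmetry; apply: (coord_uniq (c := fun a => k * coord v a)) => //.
rewrite (eq_bigr (fun a => k *: (coord v a *: a))); last by move=> a _; rewrite scalerA.
by rewrite -scaler_sumr -coord_spec.
Qed.

Lemma coordN v s : s \in S -> coord (- v) s = - coord v s.
Proof. by move=> sS; rewrite -scaleN1r coordZ // mulN1r. Qed.

Lemma coordS t s : t \in S -> s \in S -> coord t s = (s == t)%:R.
Proof.
move=> tS sS; symmetry; apply: (coord_uniq (c := fun a => (a == t)%:R)) => //.
by rewrite sum_delta.
Qed.

Definition fh (v : V) : R := \sum_(s <- S `\` J) coord v s.
Definition Hh (v : V) : R := \sum_(s <- S) coord v s.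

Lemma fhD u v : fh (u + v) = fh u + fh v.
Proof.
rewrite /fh -big_split big_seq [RHS]big_seq; apply: eq_bigr => s.
by rewrite in_fsetD => /andP[_ sS]; rewrite coordD.
Qed.

Lemma fhZ k v : fh (k *: v) = k * fh v.
Proof.
rewrite /fh mulr_sumr big_seq [RHS]big_seq; apply: eq_bigr => s.
by rewrite in_fsetD => /andP[_ sS]; rewrite coordZ.
Qed.

Lemma fhN v : fh (- v) = - fh v.
Proof. by rewrite -scaleN1r fhZ mulN1r. Qed.

Lemma fhB u v : fh (u - v) = fh u - fh v.
Proof. by rewrite fhD fhN. Qed.

Lemma fh0 : fh 0 = 0.
Proof. by have := fhZ 0 0; rewrite !scale0r mul0r. Qed.

Lemma fh_sum (I : Type) (s : seq I) (F : I -> V) :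
  fh (\sum_(i <- s) F i) = \sum_(i <- s) fh (F i).
Proof.
elim: s => [|a s IH]; first by rewrite !big_nil fh0.
by rewrite !big_cons fhD IH.
Qed.

Lemma fhJ j : j \in J -> fh j = 0.
Proof.
move=> jJ; rewrite /fh big_seq big1 // => s; rewrite in_fsetD => /andP[sJ sS].
rewrite coordS ?(JS jJ) //.
have /negPf -> : s != j by apply: contraNneq sJ => ->.
by [].
Qed.

Lemma fh_span w : in_span J w -> fh w = 0.
Proof.
move=> [c ->]; rewrite fh_sum big_seq big1 // => j jJ.
by rewrite fhZ fhJ // mulr0.
Qed.

Lemma fh_ps s : s \in S `\` J -> fh (p s) = 1.
Proof.
move=> sSJ; have sS : s \in S by move: sSJ; rewrite in_fsetD => /andP[].
have -> : p s = s - (s - p s) by apply/rowP => i; rewrite !mxE; ring.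
rewrite fhB (fh_span (p_span Hp s)) subr0.
rewrite /fh big_seq (eq_bigr (fun t => (s == t)%:R)); last first.
  by move=> t; rewrite in_fsetD => /andP[_ tS]; rewrite coordS // eq_sym.
by rewrite -big_seq sum_deltaR.
Qed.

Lemma HhD u v : Hh (u + v) = Hh u + Hh v.
Proof.
rewrite /Hh -big_split big_seq [RHS]big_seq; apply: eq_bigr => s sS.
by rewrite coordD.
Qed.

Lemma HhZ k v : Hh (k *: v) = k * Hh v.
Proof.
rewrite /Hh mulr_sumr big_seq [RHS]big_seq; apply: eq_bigr => s sS.
by rewrite coordZ.
Qed.

Lemma HhS t : t \in S -> Hh t = 1.
Proof.
move=> tS; rewrite /Hh big_seq (eq_bigr (fun s => (t == s)%:R)); last first.
  by move=> s sS; rewrite coordS // eq_sym.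
by rewrite -big_seq sum_deltaR.
Qed.

Lemma fh_pos b : inQplus D S J p b -> 0 < fh b.
Proof.
move=> [[a aD [_ bnz]] [k Hb]].
have Hf : fh b = \sum_(s <- S `\` J) (k s)%:R.
  rewrite Hb fh_sum big_seq [RHS]big_seq; apply: eq_bigr => s sSJ.
  by rewrite fhZ fh_ps // mulr1.
case: (boolP (has (fun s => 0 < k s)%N (S `\` J))) => [/hasP [s sSJ ks]|].
  rewrite Hf (big_fsetD1 s) //=.
  apply: (@lt_le_trans _ _ (k s)%:R); first by rewrite ltr0n.
  by rewrite lerDl; apply: sumr_ge0 => i _; rewrite ler0n.
move/hasPn => H; exfalso; move: bnz; rewrite Hb big_seq big1 ?eqxx // => s sSJ.
by have := H s sSJ; rewrite lt0n negbK => /eqP ->; rewrite scale0r.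
Qed.

Lemma inQ_opp b : inQ D p b -> inQ D p (- b).
Proof.
move=> [a aD [-> nz]]; exists (- a); first exact: rs_opp.
by split; [rewrite (pN Hp) | rewrite oppr_eq0].
Qed.

Lemma inQ_sign b : inQ D p b -> inQplus D S J p b \/ inQplus D S J p (- b).
Proof.
move=> Qb; have Qnb := inQ_opp Qb.
case: (Qb) => a aD [Eb nz].
case: HS => _ _ _ /(_ a aD) [k [Ha Hk]].
have Hpa : p a = \sum_(s <- S `\` J) (k s)%:~R *: p s.
  rewrite Ha (p_sum Hp) (big_fset_incl _ (fsubsetDl S J)).
    by apply: eq_bigr => s _; rewrite (pZ Hp).
  move=> s sS; rewrite in_fsetD sS andbT negbK => sJ.
  by rewrite (pJ Hp) // scaler0.
case: Hk => Hk; [left|right].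
  split => //; exists (fun s => `|k s|%N).
  rewrite Eb Hpa big_seq [RHS]big_seq; apply: eq_bigr => s sSJ.
  have sS : s \in S by move: sSJ; rewrite in_fsetD => /andP[].
  by rewrite pmulrn (gez0_abs (Hk s sS)).
split => //; exists (fun s => `|k s|%N).
rewrite Eb Hpa -sumrN big_seq [RHS]big_seq; apply: eq_bigr => s sSJ.
have sS : s \in S by move: sSJ; rewrite in_fsetD => /andP[].
by rewrite pmulrn (lez0_abs (Hk s sS)) mulrNz scaleNr.
Qed.

End Base.



Lemma seq_argmin (R : realFieldType) (T : eqType) (s : seq T) (F : T -> R) x0 :
  x0 \in s -> exists2 a, a \in s & forall b, b \in s -> F a <= F b.
Proof.
elim: s x0 => [//|y s IH] x0 _.
case: (boolP (x0 \in s)) => [/IH [a aS Ha]|_]; last first.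
  case: s IH => [_|z s IH].
    by exists y; rewrite ?mem_head // => b; rewrite inE => /eqP ->.
  have [a aS Ha] := IH z (mem_head _ _).
  case: (leP (F y) (F a)) => h.
    exists y; first exact: mem_head.
    move=> b; rewrite inE => /orP[/eqP ->//|/Ha]; exact: le_trans.
  exists a; first by rewrite inE aS orbT.
  move=> b; rewrite inE => /orP[/eqP ->|/Ha //]; exact: ltW.
case: (leP (F y) (F a)) => h.
  exists y; first exact: mem_head.
  move=> b; rewrite inE => /orP[/eqP ->//|/Ha]; exact: le_trans.
exists a; first by rewrite inE aS orbT.
move=> b; rewrite inE => /orP[/eqP ->|/Ha //]; exact: ltW.
Qed.

Section QRS.
Variables (R : realFieldType) (n : nat).
Notation V := 'rV[R]_n.
Notation dot := (@dotv R n).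
Variables (D S J : {fset V}) (p : V -> V).
Hypothesis HD : root_system D.
Hypothesis HS : is_base D S.
Hypothesis HJS : J `<` S.
Hypothesis Hp : is_orth_proj J p.

Lemma simple_dot_le0 j k : j \in S -> k \in S -> j != k -> dot j k <= 0.
Proof.
move=> jS kS jk; rewrite leNgt; apply/negP => pos.
have jD := SD HS jS; have kD := SD HS kS.
have Hjk : j + (- k) \in D.
  apply: rs_sum => //; first exact: rs_opp.
    by rewrite dotvNr oppr_lt0.
  by rewrite subr_eq0.
case: HS => _ _ _ /(_ _ Hjk) [kap [Hk Hs]].
have Hj := coord_uniq HS Hk jS; have Hkk := coord_uniq HS Hk kS.
rewrite coordD // coordN // (coordS HS jS jS) (coordS HS kS jS) in Hj.
rewrite coordD // coordN // (coordS HS jS kS) (coordS HS kS kS) in Hkk.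
move: Hj Hkk; rewrite !eqxx (negPf jk) eq_sym (negPf jk) subr0 sub0r => Hj Hkk.
case: Hs => Hs.
  by have := Hs _ kS; rewrite -(ler0z R) Hkk oppr_ge0 ler10.
by have := Hs _ jS; rewrite -(lerz0 R) Hj ler10.
Qed.

Lemma HhN v : Hh HS (- v) = - Hh HS v.
Proof. by rewrite -scaleN1r HhZ mulN1r. Qed.

Lemma lowest x a0 : a0 \in D -> p a0 = x ->
  exists2 a, a \in D & p a = x /\ forall j, j \in J -> dot a j <= 0.
Proof.
move=> a0D Ha0.
have : a0 \in [seq a <- D | p a == x] by rewrite mem_filter Ha0 eqxx.
move/(seq_argmin (Hh HS)) => [a]; rewrite mem_filter => /andP[/eqP pa aD] Hmin.
exists a => //; split => // j jJ; rewrite leNgt; apply/negP => pos.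
have jS := JS HJS jJ; have jD := SD HS jS.
set c := 2 * dot a j / dot j j.
have cpos : 0 < c by rewrite /c divr_gt0 ?mulr_gt0 // (rs_dot_gt0 HD jD).
have bD : a - c *: j \in D by apply: rs_refl.
have := Hmin (a - c *: j); rewrite mem_filter bD (pB Hp) (pZ Hp) (pJ Hp jJ).
rewrite scaler0 subr0 pa eqxx => /(_ isT).
rewrite HhD HhN HhZ (HhS HS jS) mulr1; lra.
Qed.

Lemma Q_add x y : inQ D p x -> inQ D p y -> dot x y < 0 -> x + y != 0 ->
  inQ D p (x + y).
Proof.
move=> [a0 a0D [Ex _]] Qy xy nz.
have [a aD [pa Ha]] := lowest a0D (esym Ex).
have [b0 b0D [Eny _]] := inQ_opp HD Hp Qy.
have [g gD [pg Hg]] := lowest b0D (esym Eny).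
set b := - g.
have bD : b \in D by apply: rs_opp.
have pb : p b = y by rewrite /b (pN Hp) pg opprK.
have Hb : forall j, j \in J -> 0 <= dot b j.
  by move=> j jJ; rewrite /b dotvNl oppr_ge0; apply: Hg.
set u := a - x; set v := b - y.
have uJ : in_span J u by rewrite /u -pa; apply: p_span.
have vJ : in_span J v by rewrite /v -pb; apply: p_span.
have uj : forall j, j \in J -> dot u j = dot a j.
  by move=> j jJ; rewrite /u dotvBl -pa (p_orth Hp) // subr0.
have vj : forall j, j \in J -> dot v j = dot b j.
  by move=> j jJ; rewrite /v dotvBl -pb (p_orth Hp) // subr0.
have uv : dot u v <= 0.
  case: (vJ) => c Ev.
  pose cp w := if 0 <= c w then c w else 0.
  pose cm w := if 0 <= c w then 0 else - c w.
  have cp0 w : 0 <= cp w by rewrite /cp; case: ifP.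
  have cm0 w : 0 <= cm w by rewrite /cm; case: ifPn => //; rewrite -ltNge oppr_ge0 => /ltW.
  have cpm w : cp w * cm w = 0 by rewrite /cp /cm; case: ifP; rewrite ?mulr0 ?mul0r.
  set vp := \sum_(w <- J) cp w *: w; set vm := \sum_(w <- J) cm w *: w.
  have Evpm : v = vp - vm.
    rewrite Ev /vp /vm -sumrB; apply: eq_bigr => i _; rewrite -scalerBl.
    by congr (_ *: _); rewrite /cp /cm; case: ifP; rewrite ?subr0 ?sub0r ?opprK.
  have h1 : dot vp vm <= 0.
    rewrite /vp dotv_suml big_seq; apply: sumr_le0 => i iJ.
    rewrite dotvZl /vm dotv_sumr big_seq mulr_sumr; apply: sumr_le0 => k kJ.
    rewrite dotvZr mulrA; case: (eqVneq i k) => [<-|ik].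
      by rewrite cpm mul0r.
    rewrite mulr_ge0_le0 ?mulr_ge0 //.
    apply: simple_dot_le0; [exact: (JS HJS iJ)|exact: (JS HJS kJ)|exact: ik].
  have h2 : 0 <= dot v vm.
    rewrite /vm dotv_sumr big_seq; apply: sumr_ge0 => i iJ.
    by rewrite dotvZr vj // mulr_ge0 ?Hb.
  have h3 : vm = 0.
    apply: dotv_eq0; apply/eqP; rewrite eq_le dotv_ge0 andbT.
    have E2 : vp - v = vm by rewrite Evpm opprB addrC subrK.
    have e : dot vm vm = dot vp vm - dot v vm by rewrite -dotvBl E2.
    rewrite e; lra.
  rewrite Evpm h3 subr0 /vp dotv_sumr big_seq; apply: sumr_le0 => i iJ.
  by rewrite dotvZr uj // mulr_ge0_le0 ?Ha.
have ab : dot a b < 0.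
  have Ea : a = x + u by rewrite /u addrC subrK.
  have Eb : b = y + v by rewrite /v addrC subrK.
  have xv : dot x v = 0 by rewrite -pa (p_orth_span Hp).
  have uy : dot u y = 0 by rewrite dotvC -pb (p_orth_span Hp).
  clearbody u v; rewrite Ea Eb !dotvDl !dotvDr xv uy; lra.
have abnz : a + b != 0.
  by apply: contraNneq nz => h; rewrite -pa -pb -(pD Hp) h (p0 Hp).
exists (a + b); first exact: rs_sum.
by rewrite (pD Hp) pa pb.
Qed.

Lemma Q_sub x y : inQ D p x -> inQ D p y -> 0 < dot x y -> x != y ->
  inQ D p (x - y).
Proof.
move=> Qx Qy xy nz; apply: Q_add => //; first exact: inQ_opp.
  by rewrite dotvNr oppr_lt0.
by rewrite subr_eq0.
Qed.

End QRS.



Ltac vring := repeat match goal with x := _ |- _ => subst x end;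
  apply/rowP => i; rewrite !mxE; ring.

Section Comb.
Variables (R : realFieldType) (n : nat).
Notation V := 'rV[R]_n.
Notation dot := (@dotv R n).
Variables (D S J : {fset V}) (p : V -> V) (Phi : {fset V}).
Hypothesis HD : root_system D.
Hypothesis HS : is_base D S.
Hypothesis HJS : J `<` S.
Hypothesis Hp : is_orth_proj J p.
Hypothesis HPhi : inversion_set D S J p Phi.

Notation Q := (inQ D p).
Notation P := (inQplus D S J p).
Notation Pc := (inPhic D S J p Phi).
Notation adjr := (adj D S J p Phi).
Notation connr := (conn D S J p Phi).
Notation comp := (is_comp D S J p Phi).
Notation f := (fh J HS).

Lemma Phi_P b : b \in Phi -> P b.
Proof. by case: HPhi => H _ _; apply: H. Qed.

Lemma Phi_Q b : b \in Phi -> Q b.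
Proof. by move/Phi_P => []. Qed.

Lemma Phi_f b : b \in Phi -> 0 < f b.
Proof. by move/Phi_P; apply: fh_pos. Qed.

Lemma Pc_f b : Pc b -> 0 < f b.
Proof. by move=> [Pb _]; apply: fh_pos. Qed.

Lemma Q_f b : Q b -> f b != 0.
Proof.
move=> Qb; case: (inQ_sign HD HS Hp Qb) => /(fh_pos HS HJS Hp) h.
  by rewrite gt_eqF.
by move: h; rewrite fhN oppr_gt0 => /lt_eqF ->.
Qed.

Lemma closedP a b : a \in Phi -> b \in Phi -> Q (a + b) -> a + b \in Phi.
Proof. by case: HPhi => _ H _; apply: H. Qed.

Lemma adj_sym a b : adjr a b -> adjr b a.
Proof. by case=> aP bP H; split => //; case: H; [right|left]. Qed.

Lemma conn_sym a b : connr a b -> connr b a.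
Proof.
elim => [x y /adj_sym H|x|x y z _ IH1 _ IH2].
- exact: rt_step.
- exact: rt_refl.
- exact: rt_trans IH2 IH1.
Qed.

Lemma conn_Phi a b : connr a b -> a \in Phi -> b \in Phi.
Proof. by elim => [x y [] //|//|x y z _ IH1 _ IH2] /IH1 /IH2. Qed.

Lemma comp_Phi C y : comp C -> y \in C -> y \in Phi.
Proof. by case=> x xP H /H /conn_Phi; apply. Qed.

Lemma comp_conn C y z : comp C -> y \in C -> connr y z -> z \in C.
Proof.
case=> x xP H /H xy yz; apply/H; exact: rt_trans xy yz.
Qed.

Lemma comp_adj C y z : comp C -> y \in C -> adjr y z -> z \in C.
Proof. by move=> HC yC yz; apply: (comp_conn HC yC); apply: rt_step. Qed.

Lemma comp_in_conn C y z : comp C -> y \in C -> z \in C -> connr y z.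
Proof.
by case=> x xP H /H xy /H xz; apply: rt_trans (conn_sym xy) xz.
Qed.

Lemma comp_eq A B y : comp A -> comp B -> y \in A -> y \in B -> A = B.
Proof.
move=> HA HB yA yB; apply/fsetP => z; apply/idP/idP => zX.
  by apply: (comp_conn HB yB); apply: (comp_in_conn HA yA zX).
by apply: (comp_conn HA yA); apply: (comp_in_conn HB yB zX).
Qed.

Lemma comp_ex C : comp C -> exists x, x \in C.
Proof. by case=> x xP H; exists x; apply/H; apply: rt_refl. Qed.

Lemma adj_of a b : a \in Phi -> b \in Phi -> Pc (a - b) \/ Pc (b - a) -> adjr a b.
Proof. by move=> *; split. Qed.

Lemma step A C D' a0 c0 a1 :
  comp A -> comp C -> comp D' -> D' <> A ->
  a0 \in A -> c0 \in C -> a0 + c0 \in D' -> adjr a0 a1 ->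
  exists2 c1, c1 \in C & a1 + c1 \in D'.
Proof.
move=> HA HC HD' DA a0A c0C d0D adj01.
have a1A : a1 \in A := comp_adj HA a0A adj01.
have a0P := comp_Phi HA a0A; have a1P := comp_Phi HA a1A.
have c0P := comp_Phi HC c0C; have d0P := comp_Phi HD' d0D.
set d0 := a0 + c0 in d0D d0P.
set g := a1 - a0.
have Hg : Pc g \/ Pc (- g).
  by case: adj01 => _ _ [h|h]; [right; rewrite /g opprB|left].
have notA : ~ (d0 \in A) by move=> h; apply: DA; apply: (comp_eq HD' HA d0D h).
have adjd : ~ adjr a1 d0 by move=> h; apply: notA; apply: (comp_adj HA a1A h).
have fpos := Phi_f; have fD := fhD J HS; have fN := fhN J HS.
have cg : c0 != g.
  apply/eqP => E; case: Hg => -[Pg gnP].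
    by rewrite -E c0P in gnP.
  have := fpos _ c0P; have := fh_pos HS HJS Hp Pg; rewrite fN E; lra.
have caseW : Q (c0 - g) -> exists2 c1, c1 \in C & a1 + c1 \in D'.
  move=> Qw; set w := c0 - g.
  have Ea : a1 + w = d0 by vring.
  have Ed : d0 - a1 = w by vring.
  case: (inQ_sign HD HS Hp Qw) => Pw.
    case: (boolP (w \in Phi)) => wP.
      exists w; last by rewrite Ea.
      apply: (comp_adj HC c0C); apply: adj_of => //.
      have -> : c0 - w = g by vring.
      have -> : w - c0 = - g by vring.
      by [].
    exfalso; apply: adjd; apply: adj_of => //; right; rewrite Ed; split => //.
  case: (boolP (- w \in Phi)) => wP.
    exfalso.
    have Eg : - w + c0 = g by vring.
    case: Hg => -[Pg gnP].
      by move: gnP; rewrite -Eg closedP //; case: Pg; rewrite Eg.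
    have := fh_pos HS HJS Hp Pg; rewrite fN -Eg fD.
    have := fpos _ wP; have := fpos _ c0P; lra.
  exfalso; apply: adjd; apply: adj_of => //; left.
  by have -> : a1 - d0 = - w by vring.
have caseV : Q (a1 + c0) -> exists2 c1, c1 \in C & a1 + c1 \in D'.
  move=> Qv; exists c0 => //.
  have vP : a1 + c0 \in Phi by apply: closedP.
  apply: (comp_adj HD' d0D); apply: adj_of => //.
  have -> : d0 - (a1 + c0) = - g by vring.
  have -> : a1 + c0 - d0 = g by vring.
  by case: Hg; [right|left].
have Qa1 := Phi_Q a1P; have Qc0 := Phi_Q c0P; have Qd0 := Phi_Q d0P.
have Qg : Q g by case: Hg => -[[]] //; move/(inQ_opp HD Hp); rewrite opprK.
have nz : a1 + c0 != 0.
  by apply/eqP => h; have := fpos _ a1P; have := fpos _ c0P; move: (fh0 J HS); rewrite -h fD; lra.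
case: (ltP 0 (dot c0 g)) => h1.
  by apply: caseW; apply: (Q_sub HD HS HJS Hp).
case: (ltP (dot a1 c0) 0) => h2.
  by apply: caseV; apply: (Q_add HD HS HJS Hp).
case: (ltP (dot d0 g) 0) => h3.
  apply: caseV; have -> : a1 + c0 = d0 + g by vring.
  apply: (Q_add HD HS HJS Hp) => //.
  by have <- : a1 + c0 = d0 + g by vring.
case: (ltP 0 (dot d0 a1)) => h4.
  apply: caseW; have -> : c0 - g = d0 - a1 by vring.
  apply: (Q_sub HD HS HJS Hp) => //.
  by apply: contra_neq cg => E; rewrite /g -E /d0 addrC addKr.
exfalso.
have a0nz : a0 != 0 by case: (Phi_Q a0P) => ? ? [].
have A0 := dotv_gt0 a0nz.
have Ea1 : a1 = a0 + g by rewrite /g addrC subrK.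
clearbody g; move: h1 h2 h3 h4; rewrite Ea1 /d0 !dotvDl !dotvDr.
rewrite ?(dotvC c0 a0) ?(dotvC g a0) ?(dotvC g c0); lra.
Qed.

End Comb.



Section Final.
Variables (R : realFieldType) (n : nat).
Notation V := 'rV[R]_n.
Notation dot := (@dotv R n).
Variables (D S J : {fset V}) (p : V -> V) (Phi : {fset V}).
Hypothesis HD : root_system D.
Hypothesis HS : is_base D S.
Hypothesis HJS : J `<` S.
Hypothesis Hp : is_orth_proj J p.
Hypothesis HPhi : inversion_set D S J p Phi.

Notation Q := (inQ D p).
Notation adjr := (adj D S J p Phi).
Notation connr := (conn D S J p Phi).
Notation comp := (is_comp D S J p Phi).
Notation f := (fh J HS).

Lemma P1 A C D' a0 c0 :
  comp A -> comp C -> comp D' -> D' <> A ->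
  a0 \in A -> c0 \in C -> a0 + c0 \in D' ->
  forall a, a \in A -> exists2 c, c \in C & a + c \in D'.
Proof.
move=> HA HC HD' DA a0A c0C d0D a aA.
have Hc := comp_in_conn HA a0A aA.
move: (clos_rt_rtn1 _ _ _ _ Hc); clear Hc aA.
elim => [|y z yz Hy IH]; first by exists c0.
have [c cC Hc] := IH.
apply: (step HD HS HJS Hp HPhi HA HC HD' DA _ cC Hc yz).
by apply: (comp_conn HA a0A); apply: clos_rtn1_rt.
Qed.

Lemma add_incr A C D' : comp_add D S J p Phi A C D' ->
  forall a, a \in A -> exists2 d, d \in D' & f a <= f d /\ (D' <> A -> f a < f d).
Proof.
move=> [HA HC HD' Hcase] a aA.
case: (eqVneq D' A) => [E|DA].
  by exists a; [rewrite E | split => // /(_ E)].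
have [a0 [c0 [a0A c0C d0D]]] : exists a0 c0, [/\ a0 \in A, c0 \in C & a0 + c0 \in D'].
  case: Hcase => [[[z Hz] HZ]|[_ _ _ [z Hz zD] _]].
    have zD := HZ z Hz; case: Hz => [a0 [c0 [a0A c0C Ez _]]].
    by exists a0, c0; split => //; rewrite -Ez.
  case: Hz => [a0 [c0 [a0A c0C Ez _]]].
  by exists a0, c0; split => //; rewrite -Ez.
have DA' : D' <> A by apply/eqP.
have [c cC Hc] := P1 HA HC HD' DA' a0A c0C d0D aA.
exists (a + c) => //; rewrite fhD.
have := Phi_f HS HJS Hp HPhi (comp_Phi HC cC) => hc; split; [lra | move=> _; lra].
Qed.

Lemma chain A cs B : std_sum D S J p Phi A cs B ->
  forall a, a \in A -> exists2 b, b \in B & f a <= f b /\ (A <> B -> f a < f b).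
Proof.
elim => [A0 a aA|A0 C cs0 D' B0 Hadd _ IH a aA].
  by exists a => //; split => // /(_ erefl).
have [d dD [le1 lt1]] := add_incr Hadd aA.
have [b bB [le2 lt2]] := IH d dD.
exists b => //; split; first exact: le_trans le2.
move=> AB; case: (eqVneq D' A0) => [E|DA].
  by apply: (le_lt_trans le1); apply: lt2; rewrite E.
by apply: (lt_le_trans (lt1 (elimN eqP DA))).
Qed.

Lemma std_sum_cat A cs B ds C : std_sum D S J p Phi A cs B ->
  std_sum D S J p Phi B ds C -> std_sum D S J p Phi A (cs ++ ds) C.
Proof.
elim => [//|A0 C0 cs0 D' B0 Hadd _ IH] H /=.
by apply: std_sum_cons Hadd (IH H).
Qed.

Lemma po : partial_order_on comp (comp_le D S J p Phi).
Proof.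
split.
- by move=> x _; exists [::]; split => //; constructor.
- move=> A B HA HB [cs [_ HAB]] [ds [_ HBA]].
  case: (eqVneq A B) => [//|AB]; exfalso.
  have [x xA] := comp_ex HA.
  have [a aA amax] := seq_argmin (fun v => - f v) xA.
  have [b bB [_ /(_ (elimN eqP AB)) ab]] := chain HAB aA.
  have [a' a'A [_ /(_ (fun E => elimN eqP AB (esym E))) ba]] := chain HBA bB.
  have := amax a' a'A; lra.
- move=> A B C _ _ _ [cs [Hcs HAB]] [ds [Hds HBC]].
  exists (cs ++ ds); split; last exact: std_sum_cat HAB HBC.
  by move=> X; rewrite mem_cat => /orP[/Hcs|/Hds].
Qed.

End Final.

Theorem proposition4p17 (R : realFieldType) (n : nat)
  (Delta Sigma J : {fset 'rV[R]_n}) (p : 'rV[R]_n -> 'rV[R]_n)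
  (Phi : {fset 'rV[R]_n}) :
  root_system Delta ->
  is_base Delta Sigma ->
  J `<` Sigma ->
  is_orth_proj J p ->
  inversion_set Delta Sigma J p Phi ->
  partial_order_on (is_comp Delta Sigma J p Phi)
                   (comp_le Delta Sigma J p Phi).
Proof.
move=> HD HS HJS Hp HPhi; exact: (po HD HS HJS Hp HPhi).
Qed.
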